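(* In the setting described in the context (the run $\Omega$ generated by the counterstrategy $\mathcal{E}$), every politeral unit has at most one opposite politeral unit.
   Context: Formulas are built from atoms by $\neg$ (on atoms only), binary $\wedge,\vee$ and unary $!$ (branching recurrence) and $?$ (branching corecurrence). Units. Fix a formula $\mathbb{F}_0$. Oformulas are occurrences of subformulas of $\mathbb{F}_0$. Politerals are occurrences of literals $P$ or $\neg P$ not in the scope of $\neg$. The modal depth of an oformula is the number of its proper superoccurrences of the form $!E$ or $?E$. A unit is $E[\vec x]$, with $E$ an oformula and $\vec x$ a tuple of infinite bitstrings of length equal to the modal depth of $E$. Parenthood: $G_i[\vec x]$ ($i=0,1$) are the children of $(G_0\wedge G_1)[\vec x]$ and of $(G_0\vee G_1)[\vec x]$; the units $G[\vec x,y]$ for all infinite bitstrings $y$ are the children of $!G[\vec x]$ and of $?G[\vec x]$. The $\mathbb{F}_0$-origin $\tilde E$ of $E[\vec x]$ is $E$. A politeral unit is one whose origin is a politeral. Funits. A funit is $E[\vec w]$ with $\vec w$ a tuple of finite bitstrings of length equal to the modal depth of $E$. Funits have the analogous parenthood relation, with children $G[\vec w,u]$ for finite bitstrings $u$. Addresses: the address of $\mathbb{F}_0[\,]$ is the empty string; if $\alpha$ is the address of $E[\vec w]$, then $G_i[\vec w]$ has address $\alpha i.$ (the bit $i$ followed by a period), and $G[\vec w,u]$ has address $\alpha u.$. A funit $E[w_1,\dots,w_n]$ is a funital restriction of the unit $E[x_1,\dots,x_n]$ iff each $w_j$ is a prefix of $x_j$. Its height is $\max_j|w_j|$ (or $0$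 if $n=0$), and it is regular iff all $w_j$ have the same length. Making the numeric move $a$ (a decimal numeral) in a politeral funit with address $\alpha$ means making the move $\alpha a$. A move made in a funit counts as made in every unital extension of it. Runs and projections. For a run $\Theta$ (a sequence of labmoves $\wp\beta$, $\wp\in\{\top,\bot\}$) and a string $\alpha$, $\Theta^\alpha$ keeps the labmoves whose move begins with $\alpha$ and deletes that prefix. For an infinite bitstring $y$, $\Theta^{\preceq y}$ keeps the labmoves $\wp\,u.\beta$ with $u$ a finite prefix of $y$ and deletes ''$u.$''. The projection of a run $\Omega$ on $\mathbb{F}_0[\,]$ is $\Omega$. If $\Theta$ is the projection on $E[\vec x]$, then the projection on the child $G_i[\vec x]$ of a $\wedge$/$\vee$-unit is $\Theta^{i.}$, and on the child $G[\vec x,y]$ of a $!$/$?$-unit it is $\Theta^{\preceq y}$. The run $\Omega$. For a position $\Phi$, a funit is $\Phi$-active iff $\Phi$ contains some move (by either player) of the form $\alpha\beta$ with $\alpha$ its address. A $\Phi$-prompt is a regular politeral funit $L[\vec w]$ such that either $\vec w$ is empty, or its height equals the least integer exceeding the heights of all $\Phi$-active funits. $\Omega$ is an infinite run produced by a play proceeding in rounds $1,2,3,\dots$. At the start of each round, with $\Phi$ the current position, player $\bot$ (the counterstrategy $\mathcal{E}$) lists all $\Phi$-prompts $L_1[\vec w_1],\dots,L_n[\vec w_n]$ in lexicographic order. Then, for $i=1,\dots,n$ in turn, $\bot$ makes the numeric move $a$ in $L_i[\vec w_i]$, where $a$ is the least natural number not yet made as a numeric move in any politeral funit by either player. After this,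 the adversary $\top$ (an arbitrary HPM) makes at most one move. It is assumed that $\Omega$ is legal: every move in it, by either player, has the form $\alpha a$ with $\alpha$ the address of a politeral funit and $a$ a decimal numeral. Opposite. Politeral units $L,M$ are opposite iff $\tilde L,\tilde M$ are literals one of which is the negation of the other and, for each $\wp\in\{\top,\bot\}$, the set of $\wp$-labeled moves in the projection of $\Omega$ on $L$ equals the set of $\neg\wp$-labeled moves in the projection of $\Omega$ on $M$. *)

(* Defs.v *)
From mathcomp Require Import all_boot.
Set Implicit Arguments. Unset Strict Implicit. Unset Printing Implicit Defensive.

(* Negation is applied to atoms only, so literals are leaves:
   [Lit true P] is the literal P, [Lit false P] is the literal ~P.
   Atoms are indexed by nat. *)
Inductive fml : Type :=
| Lit of bool & nat
| And of fml & fml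
| Or of fml & fml
| Bang of fml
| Ques of fml.

(* ---------- Oformulas = occurrences of subformulas of F0 ----------
   An occurrence is a path from the root of F0: at a binary node the step
   is 0 or 1 (which conjunct/disjunct), at a unary node (!/?) the step is 0. *)
Fixpoint sub (F : fml) (p : seq nat) : option fml :=
  match p with
  | [::] => Some F
  | i :: p' =>
    match F with
    | And G0 G1 | Or G0 G1 =>
        if i == 0 then sub G0 p' else if i == 1 then sub G1 p' else None
    | Bang G | Ques G => if i == 0 then sub G p' else None
    | Lit _ _ => None
    end
  end.

Definition is_occ (F : fml) (p : seq nat) : Prop := sub F p <> None.

Definition is_politeral (F : fml) (p : seq nat) : Prop :=
  exists b P, sub F p = Some (Lit b P).

Fixpoint mdepth (F : fml) (p : seq nat) : nat :=
  match p with
  | [::] => 0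
  | i :: p' =>
    match F with
    | And G0 G1 | Or G0 G1 => mdepth (if i == 0 then G0 else G1) p'
    | Bang G | Ques G => (mdepth G p').+1
    | Lit _ _ => 0
    end
  end.

(* ---------- Moves ----------
   A move is a string over the alphabet {0,...,9, '.'}; we code the decimal
   digit d by the natural number d and the period '.' by 10.  Bits 0/1 are
   the digits 0/1. *)
Definition dot : nat := 10.
Definition move := seq nat.
Definition labmove := (bool * move)%type.
Definition top := true.
Definition bot := false.

Definition bits (w : seq bool) : seq nat := map nat_of_bool w.

Definition is_numeral (a : move) : bool := (a != [::]) && all (fun d => d < 10) a.
Definition numval (a : move) : nat := foldl (fun acc d => acc * 10 + d) 0 a.
Fixpoint digs (fuel n : nat) : seq nat :=
  match fuel with
  | 0 => [::]
  | f.+1 => if n < 10 then [:: n] else rcons (digs f (n %/ 10)) (n %% 10)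
  end.
Definition dec (n : nat) : move := digs n.+1 n.

(* ---------- Funits and addresses ----------
   A funit E[w1..wn] is represented by the path p of E and the tuple ws. *)
Definition funit := (seq nat * seq (seq bool))%type.

Fixpoint addr (F : fml) (p : seq nat) (ws : seq (seq bool)) : move :=
  match p with
  | [::] => [::]
  | i :: p' =>
    match F with
    | And G0 G1 | Or G0 G1 => i :: dot :: addr (if i == 0 then G0 else G1) p' ws
    | Bang G | Ques G =>
        match ws with
        | w :: ws' => bits w ++ dot :: addr G p' ws'
        | [::] => [::]
        end
    | Lit _ _ => [::]
    end
  end.

Definition faddr (F : fml) (f : funit) : move := addr F f.1 f.2.

Definition is_funit (F : fml) (f : funit) : Prop :=
  is_occ F f.1 /\ size f.2 = mdepth F f.1.

Definition is_politeral_funit (F : fml) (f : funit) : Prop :=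
  is_funit F f /\ is_politeral F f.1.

Definition height (ws : seq (seq bool)) : nat := foldr maxn 0 (map size ws).

Definition regular (ws : seq (seq bool)) : bool :=
  all (fun w => size w == size (head [::] ws)) ws.

Definition position := seq labmove.

Definition active (F : fml) (Phi : position) (f : funit) : Prop :=
  is_funit F f /\ exists lm, lm \in Phi /\ prefix (faddr F f) lm.2.

Definition least_exceeding (F : fml) (Phi : position) (h : nat) : Prop :=
  (forall f, active F Phi f -> height f.2 < h) /\
  (forall h', (forall f, active F Phi f -> height f.2 < h') -> h <= h').

Definition prompt (F : fml) (Phi : position) (f : funit) : Prop :=
  is_politeral_funit F f /\ regular f.2 /\
  (f.2 = [::] \/ least_exceeding F Phi (height f.2)).

Fixpoint lexlt (s t : seq nat) : bool :=
  match s, t with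
  | [::], [::] => false
  | [::], _ :: _ => true
  | _ :: _, [::] => false
  | a :: s', b :: t' => (a < b) || ((a == b) && lexlt s' t')
  end.

Definition made (F : fml) (Phi : position) (n : nat) : Prop :=
  exists lm f a, lm \in Phi /\ is_politeral_funit F f /\
    lm.2 = faddr F f ++ a /\ is_numeral a /\ numval a = n.

Definition least_unmade (F : fml) (Phi : position) (a : nat) : Prop :=
  ~ made F Phi a /\ forall m, m < a -> made F Phi m.

Fixpoint bot_moves (F : fml) (Phi : position) (s : seq funit)
  (B : seq labmove) : Prop :=
  match s with
  | [::] => B = [::]
  | f :: s' => exists a B',
      least_unmade F Phi a /\
      B = (bot, faddr F f ++ dec a) :: B' /\
      bot_moves F (rcons Phi (bot, faddr F f ++ dec a)) s' B'
  end.

Definition round (F : fml) (Phi Phi' : position) : Prop :=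
  exists (s : seq funit) (B T : seq labmove),
    sorted (fun f g => lexlt (faddr F f) (faddr F g)) s /\
    (forall f, f \in s <-> prompt F Phi f) /\
    bot_moves F Phi s B /\
    size T <= 1 /\ all (fun lm => lm.1 == top) T /\
    Phi' = Phi ++ B ++ T.

(* The run Omega is given by the increasing sequence of its positions at the
   starts of rounds 1,2,3,... (pos 0 = empty position). *)
Definition generated (F : fml) (pos : nat -> position) : Prop :=
  pos 0 = [::] /\ forall k, round F (pos k) (pos k.+1).

Definition in_run (pos : nat -> position) (lm : labmove) : Prop :=
  exists k, lm \in pos k.

Definition legal (F : fml) (pos : nat -> position) : Prop :=
  forall lm, in_run pos lm ->
    exists f a, is_politeral_funit F f /\ lm.2 = faddr F f ++ a /\ is_numeral a.

(* ---------- Units and projections ----------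
   A unit E[x1..xn] is represented by the path p of E and xs, infinite
   bitstrings being functions nat -> bool. *)
Definition bitstring := nat -> bool.

Definition is_unit (F : fml) (p : seq nat) (xs : seq bitstring) : Prop :=
  is_occ F p /\ size xs = mdepth F p.

Definition is_politeral_unit (F : fml) (p : seq nat) (xs : seq bitstring) : Prop :=
  is_unit F p xs /\ is_politeral F p.

Definition pref (y : bitstring) (n : nat) : move := [seq nat_of_bool (y i) | i <- iota 0 n].

(* Per-move projection: proj F p xs m = Some beta iff the move m survives
   the successive operations Theta^{i.} / Theta^{<= y} along the path to
   the unit, and then becomes beta. *)
Fixpoint proj (F : fml) (p : seq nat) (xs : seq bitstring) (m : move) : option move :=
  match p with
  | [::] => Some m
  | i :: p' =>
    match F with
    | And G0 G1 | Or G0 G1 =>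
        if prefix [:: i; dot] m then proj (if i == 0 then G0 else G1) p' xs (drop 2 m)
        else None
    | Bang G | Ques G =>
        match xs with
        | y :: xs' =>
            let u := take (index dot m) m in
            if (dot \in m) && (u == pref y (size u))
            then proj G p' xs' (drop (size u).+1 m) else None
        | [::] => None
        end
    | Lit _ _ => None
    end
  end.

Definition in_proj (F : fml) (pos : nat -> position) (p : seq nat)
  (xs : seq bitstring) (wp : bool) (beta : move) : Prop :=
  exists m, in_run pos (wp, m) /\ proj F p xs m = Some beta.

Definition opposite (F : fml) (pos : nat -> position)
  (pL : seq nat) (xL : seq bitstring) (pM : seq nat) (xM : seq bitstring) : Prop :=
  is_politeral_unit F pL xL /\ is_politeral_unit F pM xM /\
  (exists b P, sub F pL = Some (Lit b P) /\ sub F pM = Some (Lit (~~ b) P)) /\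
  (forall (wp : bool) (beta : move),
      in_proj F pos pL xL wp beta <-> in_proj F pos pM xM (~~ wp) beta).

(* Main.v *)
Require Import Defs.
From Stdlib Require Import Classical FunctionalExtensionality.
From mathcomp Require Import all_boot.
Set Implicit Arguments. Unset Strict Implicit.

Lemma digs_ok f n : n < f -> all (fun d => d < 10) (digs f n) && (digs f n != [::]) && (numval (digs f n) == n).
Proof.
elim: f n => [|f IH] n //= Hn.
case: ifP => H10; first by rewrite /= H10 /numval /=.
have Hq : n %/ 10 < f.
  have : n %/ 10 < n by rewrite ltn_Pdiv // lt0n; apply/eqP => E; rewrite E in H10.
  move=> H; exact: leq_trans H Hn.
case/andP: (IH _ Hq) => /andP [Ha Hne] /eqP Hv.
rewrite all_rcons ltn_mod Ha /=; apply/andP; split.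
  by case: (digs f (n %/ 10)) Hne.
by rewrite /numval foldl_rcons -/(numval _) Hv -divn_eq.
Qed.

Lemma dec_numeral n : is_numeral (dec n).
Proof. by case/andP: (digs_ok (ltnSn n)) => /andP[H1 H2] _; rewrite /is_numeral H1 H2. Qed.
Lemma dec_val n : numval (dec n) = n.
Proof. by case/andP: (digs_ok (ltnSn n)) => _ /eqP. Qed.
Lemma dec_inj : injective dec.
Proof. by move=> m n E; rewrite -(dec_val m) E dec_val. Qed.
Lemma dot_dec n : dot \notin dec n.
Proof.
apply/negP=> H; case/andP: (digs_ok (ltnSn n)) => /andP[H1 _] _.
by move/allP: H1 => /(_ _ H).
Qed.

Fixpoint restr (ws : seq (seq bool)) (xs : seq bitstring) : Prop :=
  match ws, xs with
  | [::], [::] => True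
  | w :: ws', x :: xs' => bits w = pref x (size w) /\ restr ws' xs'
  | _, _ => False
  end.

Lemma dot_bits w : dot \notin bits w.
Proof. by elim: w => //= b w IH; rewrite in_cons negb_or IH andbT; case: b. Qed.

Lemma size_bits w : size (bits w) = size w.
Proof. by rewrite /bits size_map. Qed.

Lemma bang_split w rest :
  let m := bits w ++ dot :: rest in
  [/\ index dot m = size w, dot \in m, take (index dot m) m = bits w
    & drop (size (take (index dot m) m)).+1 m = rest].
Proof.
have Hi : index dot (bits w ++ dot :: rest) = size w.
  by rewrite index_cat (negbTE (dot_bits w)) /= addn0 size_map.
have Hs : size (bits w) = size w by rewrite /bits size_map.
have Ht : take (size w) (bits w ++ dot :: rest) = bits w by rewrite take_size_cat.
rewrite /= Hi mem_cat in_cons eqxx orbT Ht Hs.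
split => //.
by rewrite -add1n -drop_drop drop_size_cat //= drop0.
Qed.

Lemma proj_addr F p xs q ws a beta :
  is_politeral F p -> size xs = mdepth F p ->
  is_politeral F q -> size ws = mdepth F q -> dot \notin a ->
  (proj F p xs (addr F q ws ++ a) = Some beta <-> [/\ q = p, restr ws xs & beta = a]).
Proof.
elim: p F xs q ws => [|i p IH] F xs q ws [b [P Hp]] Hxs [b' [P' Hq]] Hws Ha.
  case: F Hp Hxs Hq Hws => //= b0 P0 _ Hxs.
  case: q => [|j q] //= _ Hws.
  case: xs Hxs => // _; case: ws Hws => // _ /=.
  by split; [case=> ->| case=> _ _ ->].
case: F Hp Hxs Hq Hws => [b0 P0|G0 G1|G0 G1|G|G] //=.
- case: i => [|[|i]] // Hp Hxs; case: q => [|[|[|j]] q] //= Hq Hws.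
  + rewrite ?prefix0s ?drop0 (IH _ _ _ _ _ Hxs _ Hws Ha); try by eexists; eexists; eauto.
    split => [[-> Hr ->]|[Eq Hr ->]]; first by split.
    by case: Eq => ->.
  + by split => //; case.
  + by split => //; case.
  + rewrite ?prefix0s ?drop0 (IH _ _ _ _ _ Hxs _ Hws Ha); try by eexists; eexists; eauto.
    split => [[-> Hr ->]|[Eq Hr ->]]; first by split.
    by case: Eq => ->.
- case: i => [|[|i]] // Hp Hxs; case: q => [|[|[|j]] q] //= Hq Hws.
  + rewrite ?prefix0s ?drop0 (IH _ _ _ _ _ Hxs _ Hws Ha); try by eexists; eexists; eauto.
    split => [[-> Hr ->]|[Eq Hr ->]]; first by split.
    by case: Eq => ->.
  + by split => //; case.
  + by split => //; case.
  + rewrite ?prefix0s ?drop0 (IH _ _ _ _ _ Hxs _ Hws Ha); try by eexists; eexists; eauto.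
    split => [[-> Hr ->]|[Eq Hr ->]]; first by split.
    by case: Eq => ->.
- case: i => [|i] // Hp Hxs; case: q => [|[|j] q] //= Hq Hws.
  case: ws Hws => [|w ws] //= [Hws]; case: xs Hxs => [|y xs] //= [Hxs].
  rewrite -catA /=.
  case: (bang_split w (addr G q ws ++ a)) => /= -> -> -> ->.
  rewrite size_bits; case: eqP => /= E.
    rewrite ?prefix0s ?drop0 (IH _ _ _ _ _ Hxs _ Hws Ha); try by eexists; eexists; eauto.
    split => [[-> Hr ->]|[Eq [_ Hr] ->]]; first by split => //; split.
    by case: Eq => ->.
  by split => //; case=> _ [].
- case: i => [|i] // Hp Hxs; case: q => [|[|j] q] //= Hq Hws.
  case: ws Hws => [|w ws] //= [Hws]; case: xs Hxs => [|y xs] //= [Hxs].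
  rewrite -catA /=.
  case: (bang_split w (addr G q ws ++ a)) => /= -> -> -> ->.
  rewrite size_bits; case: eqP => /= E.
    rewrite ?prefix0s ?drop0 (IH _ _ _ _ _ Hxs _ Hws Ha); try by eexists; eexists; eauto.
    split => [[-> Hr ->]|[Eq [_ Hr] ->]]; first by split => //; split.
    by case: Eq => ->.
  by split => //; case=> _ [].
Qed.

Definition mkw (H : nat) (x : bitstring) : seq bool := [seq x i | i <- iota 0 H].

Lemma size_mkw H x : size (mkw H x) = H.
Proof. by rewrite /mkw size_map size_iota. Qed.
Lemma bits_mkw H x : bits (mkw H x) = pref x H.
Proof. by rewrite /bits /mkw /pref -map_comp. Qed.

Lemma restr_mkw H xs : restr (map (mkw H) xs) xs.
Proof. by elim: xs => //= x xs IH; rewrite bits_mkw size_mkw. Qed.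

Lemma pref_nth x n i : i < n -> nth 0 (pref x n) i = nat_of_bool (x i).
Proof. by move=> Hi; rewrite /pref (nth_map 0) ?size_iota // nth_iota. Qed.

Lemma restr_mkw_eq H xs ys : restr (map (mkw H) xs) ys ->
  forall j i, i < H -> nth (fun _ => false) xs j i = nth (fun _ => false) ys j i.
Proof.
elim: xs ys => [|x xs IH] [|y ys] //= [E R] [|j] i Hi /=; last exact: IH.
move: E; rewrite bits_mkw size_mkw => /(congr1 (fun s => nth 0 s i)).
by rewrite !pref_nth //; case: (x i); case: (y i).
Qed.

Lemma restr_size ws xs : restr ws xs -> size ws = size xs.
Proof. by elim: ws xs => [|w ws IH] [|x xs] //= [_ /IH ->]. Qed.

Section Run.
Variable F : fml.
Variable pos : nat -> position.
Hypothesis gen : generated F pos.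

Lemma pos_mono k k' lm : k <= k' -> lm \in pos k -> lm \in pos k'.
Proof.
move=> /subnK <-; elim: (k' - k) => [|n IH] //= H.
case: gen => _ /(_ (n + k)) [s [B [T [_ [_ [_ [_ [_ ->]]]]]]]].
by rewrite mem_cat IH.
Qed.

Definition Inv (Phi : position) := forall Phi1 lm Phi2, Phi = Phi1 ++ lm :: Phi2 -> lm.1 = bot ->
  exists g a, is_politeral_funit F g /\ lm.2 = faddr F g ++ dec a /\ ~ made F Phi1 a.

Lemma Inv_rcons Phi lm : Inv Phi ->
  (lm.1 = bot -> exists g a, is_politeral_funit F g /\ lm.2 = faddr F g ++ dec a /\ ~ made F Phi a) ->
  Inv (rcons Phi lm).
Proof.
move=> I Hlm Phi1 lm' Phi2; case/lastP: Phi2 => [|Phi2 x] E.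
  move: E; rewrite cats1 => /rcons_inj [<- <-]; exact: Hlm.
move: E; rewrite -rcons_cons -rcons_cat => /rcons_inj [E _]; exact: I E.
Qed.

Lemma Inv_top Phi T : Inv Phi -> all (fun lm => lm.1 == top) T -> Inv (Phi ++ T).
Proof.
elim: T Phi => [|x T IH] Phi I /=; first by rewrite cats0.
case/andP => /eqP Hx HT; rewrite -cat_rcons; apply: IH => //.
by apply: Inv_rcons => // Hb; rewrite Hb in Hx.
Qed.

Lemma Inv_bot Phi s B : Inv Phi -> (forall f, f \in s -> is_politeral_funit F f) ->
  bot_moves F Phi s B -> Inv (Phi ++ B).
Proof.
elim: s Phi B => [|f s IH] Phi B I Hs /=; first by move=> ->; rewrite cats0.
case=> a [B' [[Hna _] [-> HB]]]; rewrite -cat_rcons; apply: IH HB.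
  apply: Inv_rcons => // _; exists f, a; split => //; apply: Hs; exact: mem_head.
by move=> g Hg; apply: Hs; rewrite in_cons Hg orbT.
Qed.

Lemma Inv_pos k : Inv (pos k).
Proof.
elim: k => [|k IH].
  case: gen => -> _ Phi1 lm Phi2; by case: Phi1.
case: gen => _ /(_ k) [s [B [T [_ [Hs [HB [_ [HT ->]]]]]]]].
rewrite catA; apply: Inv_top => //; apply: Inv_bot HB => // f /Hs [] [] //.
Qed.

Lemma bot_mem Phi s B f : bot_moves F Phi s B -> f \in s ->
  exists a, (bot, faddr F f ++ dec a) \in B.
Proof.
elim: s Phi B => [|g s IH] Phi B //= [a [B' [_ [-> HB]]]].
rewrite in_cons => /orP [/eqP ->|Hf]; first by exists a; rewrite mem_head.
by case: (IH _ _ HB Hf) => a' H; exists a'; rewrite in_cons H orbT.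
Qed.

End Run.

Lemma made_of F Phi lm f a : lm \in Phi -> is_politeral_funit F f ->
  lm.2 = faddr F f ++ dec a -> made F Phi a.
Proof.
move=> H1 H2 H3; exists lm, f, (dec a); split => //; split => //; split => //.
by split; [exact: dec_numeral | exact: dec_val].
Qed.

Lemma height_addr F q ws : is_funit F (q, ws) -> height ws <= size (addr F q ws).
Proof.
elim: q F ws => [|i q IH] F ws [/= Ho Hs].
  by case: ws Hs => //; case: F Ho.
case: F Ho Hs => [b P|G0 G1|G0 G1|G|G] /= Ho Hs.
- by case: Ho.
- case: i Ho Hs => [|[|i]] //= Ho Hs; apply: leqW; apply: leqW; exact: IH.
- case: i Ho Hs => [|[|i]] //= Ho Hs; apply: leqW; apply: leqW; exact: IH.
- case: i Ho Hs => [|i] //= Ho; case: ws => [|w ws] //= [Hs].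
  rewrite /height /= -/(height ws) size_cat size_bits /= geq_max leq_addr /=.
  rewrite -addSnnS; apply: leq_trans (IH _ _ _) (leq_addl _ _); by split.
- case: i Ho Hs => [|i] //= Ho; case: ws => [|w ws] //= [Hs].
  rewrite /height /= -/(height ws) size_cat size_bits /= geq_max leq_addr /=.
  rewrite -addSnnS; apply: leq_trans (IH _ _ _) (leq_addl _ _); by split.
Qed.

Lemma least_ex (P : nat -> Prop) n : P n -> exists m, P m /\ forall k, P k -> m <= k.
Proof.
elim: n {-2}n (leqnn n) => [|n IH] m Hm Pm.
  by exists m; split => // k _; move: Hm; rewrite leqn0 => /eqP ->.
case: (classic (exists k, k < m /\ P k)) => [[k [Hk Pk]]|Hno].
  by apply: (IH k) => //; rewrite -ltnS; exact: leq_trans Hk Hm.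
exists m; split => // k Pk; rewrite leqNgt; apply/negP => Hk; apply: Hno; by exists k.
Qed.

Lemma max_bound (Phi : position) lm : lm \in Phi -> size lm.2 <= foldr maxn 0 [seq size l.2 | l <- Phi].
Proof.
elim: Phi => [|x Phi IH] //=; rewrite in_cons => /orP [/eqP ->|H].
  exact: leq_maxl.
exact: leq_trans (IH H) (leq_maxr _ _).
Qed.

Lemma LE_ex F Phi : exists H, least_exceeding F Phi H.
Proof.
have HP : (fun h => forall f, active F Phi f -> height f.2 < h)
  (foldr maxn 0 [seq size l.2 | l <- Phi]).+1.
  move=> [q ws] [Hf [lm [Hlm Hp]]] /=; rewrite ltnS.
  apply: leq_trans (height_addr Hf) _.
  exact: leq_trans (size_prefix Hp) (max_bound Hlm).
have [H [PH HH]] := @least_ex (fun h => forall f, active F Phi f -> height f.2 < h) _ HP.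
by exists H; split.
Qed.

Lemma mem_split (T : eqType) (x : T) s : x \in s -> exists s1 s2, s = s1 ++ x :: s2.
Proof. by move=> /splitPr [s1 s2]; exists s1, s2. Qed.

Lemma split_nth (T : eqType) (A1 B1 A2 B2 : seq T) x y :
  A1 ++ x :: B1 = A2 ++ y :: B2 -> nth x (A2 ++ y :: B2) (size A1) = x.
Proof. by move=> <-; rewrite nth_cat ltnn subnn. Qed.

Lemma key F pos pL xL p1 x1 p2 x2 ws a : generated F pos ->
  opposite F pos pL xL p1 x1 -> opposite F pos pL xL p2 x2 ->
  restr ws x1 -> in_run pos (bot, addr F p1 ws ++ dec a) -> p1 = p2 /\ restr ws x2.
Proof.
move=> gen [_ [[[Ho1 Hs1] Hl1] [_ E1]]] [_ [[[Ho2 Hs2] Hl2] [_ E2]]] Hr [k1 Hm1].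
have Hws : size ws = mdepth F p1 by rewrite (restr_size Hr).
have P1 : proj F p1 x1 (addr F p1 ws ++ dec a) = Some (dec a).
  by apply/proj_addr => //; exact: dot_dec.
have [m2 [[k2 Hm2] Pm2]] : in_proj F pos p2 x2 bot (dec a).
  apply: (proj1 (E2 top _)); apply: (proj2 (E1 top _)); by exists (addr F p1 ws ++ dec a); split => //; exists k1.
set K := maxn k1 k2.
move: (pos_mono gen (leq_maxl k1 k2) Hm1) (pos_mono gen (leq_maxr k1 k2) Hm2).
rewrite -/K => /mem_split [A1 [B1 D1]] /mem_split [A2 [B2 D2]].
have I := @Inv_pos _ _ gen K.
have [g1 [a1 [[[Hg1o Hg1s] Hg1l] [Eg1 Nm1]]]] := I _ _ _ D1 erefl.
have [g2 [a2 [[[Hg2o Hg2s] Hg2l] [Eg2 Nm2]]]] := I _ _ _ D2 erefl.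
move: P1; rewrite /= in Eg1 Eg2; rewrite [in proj _ _ _ _]Eg1 /faddr.
case/proj_addr => // [|_ _ /dec_inj Ea1]; first exact: dot_dec.
move: (Pm2); rewrite Eg2 /faddr.
case/proj_addr => // [|_ _ /dec_inj Ea2]; first exact: dot_dec.
subst a1 a2.
have M1 : (bot, addr F p1 ws ++ dec a) \in pos K by rewrite D1 mem_cat mem_head orbT.
case: (ltngtP (size A1) (size A2)) => Hsz.
- exfalso; apply: Nm2; apply: (@made_of _ _ (bot, addr F p1 ws ++ dec a) (p1, ws)) => //.
  have := split_nth (etrans (esym D1) D2).
  rewrite nth_cat Hsz => <-; exact: mem_nth.
- exfalso; apply: Nm1; apply: (@made_of _ _ (bot, m2) g2) => //.
  have := split_nth (etrans (esym D2) D1).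
  rewrite nth_cat Hsz => <-; exact: mem_nth.
- have := split_nth (etrans (esym D1) D2).
  rewrite Hsz nth_cat ltnn subnn /= => [[Em]].
  move: Pm2; rewrite Em.
  case/proj_addr => //; first exact: dot_dec.
  
Qed.

Lemma height_mkw H x xs : height (map (mkw H) (x :: xs)) = H.
Proof.
elim: xs x => [|y xs IH] x; rewrite /height /= size_mkw; first by rewrite maxn0.
by move: (IH y); rewrite /height /= size_mkw => ->; rewrite maxnn.
Qed.

Lemma bot_round F pos p1 x1 k H : generated F pos -> is_politeral_unit F p1 x1 ->
  least_exceeding F (pos k) H ->
  exists a, (bot, faddr F (p1, map (mkw H) x1) ++ dec a) \in pos k.+1.
Proof.
move=> gen [[Ho Hs] Hl] HLE.
case: gen => _ /(_ k) [s [B [T [_ [Hsp [HB [_ [_ ->]]]]]]]].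
have Hp : prompt F (pos k) (p1, map (mkw H) x1).
  split; first by split => //; split => //=; rewrite size_map.
  split.
    rewrite /regular; case: x1 {Hs} => [|x xs] //=; rewrite size_mkw eqxx /=.
    elim: xs => //= y ys ->; by rewrite size_mkw eqxx.
  case: x1 {Hs} => [|x xs]; [by left | right].
  by rewrite /= height_mkw.
have [a Ha] := bot_mem HB (proj2 (Hsp _) Hp).
by exists a; rewrite !mem_cat Ha orbT.
Qed.

Lemma grow F pos p1 x1 : generated F pos -> is_politeral_unit F p1 x1 -> x1 <> [::] ->
  forall k H, least_exceeding F (pos k) H -> k <= H.
Proof.
move=> gen HM Hne; elim => [|k IH] H' HLE //.
have [H0 HLE0] := LE_ex F (pos k).
have Hk := IH _ HLE0.
have [a Ha] := @bot_round _ _ p1 x1 k H0 gen HM HLE0.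
case: HM => [[Ho Hs] Hl].
have Hact : active F (pos k.+1) (p1, map (mkw H0) x1).
  split; first by split => //=; rewrite size_map.
  by exists (bot, faddr F (p1, map (mkw H0) x1) ++ dec a); split => //=; exact: prefix_prefix.
have := proj1 HLE _ Hact; case: x1 Hne {Hs Ha Hact} => [|x xs] // _.
rewrite /= height_mkw => HH; exact: leq_ltn_trans Hk HH.
Qed.

Theorem lemma7p1 (F0 : fml) (pos : nat -> position) :
  generated F0 pos -> legal F0 pos ->
  forall (pL : seq nat) (xL : seq bitstring),
    is_politeral_unit F0 pL xL ->
    forall (p1 : seq nat) (x1 : seq bitstring) (p2 : seq nat) (x2 : seq bitstring),
      opposite F0 pos pL xL p1 x1 -> opposite F0 pos pL xL p2 x2 ->
      p1 = p2 /\ x1 = x2.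
Proof.
move=> gen _ pL xL _ p1 x1 p2 x2 O1 O2.
have HM1 : is_politeral_unit F0 p1 x1 by case: O1 => _ [].
have [H0 HLE0] := LE_ex F0 (pos 0).
have [a Ha] := @bot_round _ _ p1 x1 0 H0 gen HM1 HLE0.
have [E _] := key gen O1 O2 (restr_mkw H0 x1) (ex_intro _ 1 Ha).
subst p2; split => //.
have Hsz : size x1 = size x2.
  by case: O1 => _ [[[_ ->] _] _]; case: O2 => _ [[[_ ->] _] _].
have [E1|Hne] : x1 = [::] \/ x1 <> [::] by case: (x1) => [|x xs]; [left|right].
  by move: Hsz; rewrite E1; case: (x2).
apply: (eq_from_nth (x0 := fun _ => false)) => // j Hj.
apply: functional_extensionality => i.
have [H HLE] := LE_ex F0 (pos i.+1).
have Hi := grow gen HM1 Hne HLE.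
have [b Hb] := @bot_round _ _ p1 x1 i.+1 H gen HM1 HLE.
have [_ Hr] := key gen O1 O2 (restr_mkw H x1) (ex_intro _ i.+2 Hb).
exact: restr_mkw_eq Hr j i Hi.
Qed.
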